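(* Let $S_{r,N}$ be an atomic exponential Puiseux semiring. Then $\mathsf{c}(S_{r,N})=0$ if $r\in\mathbb{N}$, and $\mathsf{c}(S_{r,N})=\max(\mathsf{n}(r),\mathsf{d}(r))^{\delta_0}$ if $r\notin\mathbb{N}$.
   Context: $\mathbb{N}=\{0,1,2,\dots\}$. A numerical monoid $N$ is an additive submonoid of $\mathbb{N}$ with finite complement in $\mathbb{N}$; let $s_0=0<s_1<\cdots$ be its elements and $\delta_0=s_1-s_0=s_1$ (the smallest positive element of $N$). For $r\in\mathbb{Q}_{>0}$ write $r=\mathsf{n}(r)/\mathsf{d}(r)$ in lowest terms. The exponential Puiseux semiring $S_{r,N}$ is the additive submonoid of $\mathbb{Q}_{\ge0}$ generated by $\{r^k:k\in N\}$ (equal to $\mathbb{N}$ if $r\in\mathbb{N}$; atomic for $r\notin\mathbb{N}$ iff $\mathsf{n}(r)>1$). For factorizations $z=\sum\alpha_a a$, $z'=\sum\beta_a a$ of an element of an atomic monoid, $\gcd(z,z')=\sum\min(\alpha_a,\beta_a)a$ and $\mathsf{d}(z,z')=\max(|z|,|z'|)-|\gcd(z,z')|$. The catenary degree $\mathsf{c}(x)$ is the least $n\in\mathbb{N}\cup\{\infty\}$ such that any two factorizations of $x$ are joined by a chain of factorizations of $x$ with consecutive distances at most $n$; $\mathsf{c}(M)=\sup_{x\in M}\mathsf{c}(x)$. *)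

(* Defs.v *)
From mathcomp Require Import all_boot all_order all_algebra.
Set Implicit Arguments. Unset Strict Implicit. Unset Printing Implicit Defensive.
Import Order.TTheory GRing.Theory Num.Theory.
Local Open Scope ring_scope.

Definition numerical_monoid (N : nat -> Prop) : Prop :=
  [/\ N 0%N, (forall a b, N a -> N b -> N (a + b)%N)
    & exists m : nat, forall n, (m <= n)%N -> N n].

Definition S_rN (r : rat) (N : nat -> Prop) (x : rat) : Prop :=
  exists s : seq nat, (forall k, k \in s -> N k) /\ x = \sum_(k <- s) r ^+ k.

Definition is_atom (M : rat -> Prop) (a : rat) : Prop :=
  [/\ M a, a != 0 & forall b c, M b -> M c -> a = b + c -> b = 0 \/ c = 0].

(* A factorization of x: a finite multiset (represented by a sequence,
   considered up to permutation) of atoms summing to x. *)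
Definition is_factorization (M : rat -> Prop) (x : rat) (z : seq rat) : Prop :=
  (forall a, a \in z -> is_atom M a) /\ \sum_(a <- z) a = x.

Definition atomic (M : rat -> Prop) : Prop :=
  forall x, M x -> exists z, is_factorization M x z.

Definition gcd_len (z z' : seq rat) : nat :=
  (\sum_(a <- undup z) minn (count_mem a z) (count_mem a z'))%N.

Definition fdist (z z' : seq rat) : nat :=
  (maxn (size z) (size z') - gcd_len z z')%N.

Definition n_chain (M : rat -> Prop) (x : rat) (n : nat) (z z' : seq rat) : Prop :=
  exists zs : seq (seq rat),
    (forall w, w \in zs -> is_factorization M x w) /\
    path (fun u v => fdist u v <= n)%N z zs /\ last z zs = z'.

Definition catenary_le (M : rat -> Prop) (n : nat) : Prop :=
  forall x z z', M x -> is_factorization M x z -> is_factorization M x z' ->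
    n_chain M x n z z'.

Definition catenary_degree_eq (M : rat -> Prop) (v : nat) : Prop :=
  catenary_le M v /\ forall n, catenary_le M n -> (v <= n)%N.

(* Main.v *)
Require Import Defs.
From mathcomp Require Import all_boot all_order all_algebra.
From mathcomp Require Import zify ring lra.
From Stdlib Require Import Classical.
Import Order.TTheory GRing.Theory Num.Theory.
Local Open Scope ring_scope.

Lemma sum_count_undup (T : eqType) (s t : seq T) : {subset s <= t} ->
  (\sum_(a <- undup t) count_mem a s)%N = size s.
Proof.
elim: s => [|x s IH] sub /=; first by rewrite big1.
rewrite big_split /= IH; last by move=> y ys; apply: sub; rewrite inE ys orbT.
rewrite -add1n; congr (_ + _)%N.
have xt : x \in undup t by rewrite mem_undup; apply: sub; rewrite inE eqxx.
rewrite (bigD1_seq x) ?undup_uniq //= eqxx big1 // => i /negPf; rewrite eq_sym => ->.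
by [].
Qed.

Lemma gcd_len_perm_l (v u u' : seq rat) : perm_eq u u' ->
  gcd_len u v = gcd_len u' v.
Proof.
move=> p; rewrite /gcd_len.
have pu : perm_eq (undup u) (undup u').
  by apply: uniq_perm; rewrite ?undup_uniq // => x; rewrite !mem_undup (perm_mem p).
rewrite (perm_big _ pu) /=; apply: eq_bigr => a _.
by rewrite (permP p).
Qed.

Lemma gcd_lenC (u v : seq rat) : gcd_len u v = gcd_len v u.
Proof.
rewrite /gcd_len.
have E : forall u v : seq rat, (\sum_(a <- undup u) minn (count_mem a u) (count_mem a v))%N =
   (\sum_(a <- [seq a <- undup u | a \in v]) minn (count_mem a u) (count_mem a v))%N.
  move=> u1 v1; rewrite big_filter [in RHS]big_mkcond /=; apply: eq_bigr => a _.
  by case: ifP => // /negbT /count_memPn ->; rewrite minn0.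
rewrite !E.
rewrite [in RHS](eq_bigr (fun a => minn (count_mem a u) (count_mem a v))); last by move=> a _; rewrite minnC.
apply: perm_big; apply: uniq_perm; rewrite ?filter_uniq ?undup_uniq // => x.
by rewrite !mem_filter !mem_undup andbC.
Qed.

Lemma fdistC (u v : seq rat) : fdist u v = fdist v u.
Proof. by rewrite /fdist maxnC gcd_lenC. Qed.

Lemma fdist_perm_l (u u' v : seq rat) : perm_eq u u' -> fdist u v = fdist u' v.
Proof. by move=> p; rewrite /fdist (perm_size p) (gcd_len_perm_l v u u' p). Qed.

Lemma fdist_perm_r (u v v' : seq rat) : perm_eq v v' -> fdist u v = fdist u v'.
Proof. by move=> p; rewrite fdistC (fdist_perm_l v v' u p) fdistC. Qed.

Lemma gcd_len_ge (a b w : seq rat) : (size w <= gcd_len (a ++ w) (b ++ w))%N.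
Proof.
rewrite /gcd_len -(sum_count_undup _ w (a ++ w)); last first.
  by move=> x xw; rewrite mem_cat xw orbT.
apply: leq_sum => x _; rewrite leq_min !count_cat !leq_addl //.
Qed.

Lemma fdist_move (a b w : seq rat) :
  (fdist (a ++ w) (b ++ w) <= maxn (size a) (size b))%N.
Proof.
rewrite /fdist !size_cat; have := gcd_len_ge a b w.
rewrite !maxnE; lia.
Qed.

Lemma gcd_len_disj (u v : seq rat) : (forall x, x \in u -> x \notin v) -> gcd_len u v = 0%N.
Proof.
move=> H; rewrite /gcd_len big1_seq // => x; rewrite mem_undup => /andP [_ xu].
by move/count_memPn: (H x xu) => ->; rewrite minn0.
Qed.

Lemma fdist_disj (u v : seq rat) : (forall x, x \in u -> x \notin v) -> fdist u v = maxn (size u) (size v).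
Proof. by move=> H; rewrite /fdist gcd_len_disj // subn0. Qed.

Lemma gcd_len_self (u : seq rat) : gcd_len u u = size u.
Proof.
rewrite /gcd_len -(sum_count_undup _ u u) //; apply: eq_bigr => a _; by rewrite minnn.
Qed.

Lemma fdist_perm (u v : seq rat) : perm_eq u v -> fdist u v = 0%N.
Proof.
move=> p; rewrite (fdist_perm_l u v v p) /fdist maxnn gcd_len_self subnn //.
Qed.

Lemma chain_refl M x n z : n_chain M x n z z.
Proof. by exists [::]. Qed.

Lemma chain_step M x n z z' : is_factorization M x z' -> (fdist z z' <= n)%N ->
  n_chain M x n z z'.
Proof.
move=> f d; exists [:: z']; split => //=; last by rewrite d.
by move=> w; rewrite inE => /eqP ->.
Qed.

Lemma chain_trans M x n z y z' : n_chain M x n z y -> n_chain M x n y z' ->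
  n_chain M x n z z'.
Proof.
move=> [zs1 [f1 [p1 l1]]] [zs2 [f2 [p2 l2]]]; exists (zs1 ++ zs2); split; [|split].
- by move=> w; rewrite mem_cat => /orP [/f1|/f2].
- by rewrite cat_path p1 l1 p2.
- by rewrite last_cat l1.
Qed.

Lemma chain_sym M x n z z' : is_factorization M x z -> n_chain M x n z z' ->
  n_chain M x n z' z.
Proof.
move=> fz [zs [f [p l]]]; elim: zs z fz f p l => [|y zs IH] z fz f p l.
  by rewrite -l; apply: chain_refl.
move: p => /= /andP [d p].
have fy : is_factorization M x y by apply: f; rewrite inE eqxx.
apply: (chain_trans _ _ _ z' y).
  apply: IH => // w wi; apply: f; by rewrite inE wi orbT.
by apply: chain_step => //; rewrite fdistC.
Qed.

Lemma chain_perm M x n z z' : is_factorization M x z' -> perm_eq z z' -> n_chain M x n z z'.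
Proof. by move=> f p; apply: chain_step => //; rewrite fdist_perm. Qed.

Lemma path_cross (T : eqType) (e : rel T) (P : pred T) z zs :
  path e z zs -> P z -> ~~ P (last z zs) ->
  exists u v, [/\ P u, ~~ P v, u \in z :: zs, v \in zs & e u v].
Proof.
elim: zs z => [|y zs IH] z /=; first by move=> _ ->.
move=> /andP [ezy p] Pz nP.
case Py: (P y).
  have [u [v [H1 H2 H3 H4 H5]]] := IH y p Py nP.
  by exists u, v; split => //; rewrite inE ?H3 ?H4 orbT.
by exists z, y; rewrite Py !inE !eqxx ?orbT.
Qed.

Definition sumr (r : rat) (s : seq nat) : rat := \sum_(k <- s) r ^+ k.
Definition sumN (n d K L : nat) (s : seq nat) : nat := (\sum_(k <- s) n ^ (k - K) * d ^ (L - k))%N.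

Lemma term_conv (r : rat) (n d K L k : nat) : r = n%:R / d%:R -> (0 < n)%N -> (0 < d)%N ->
  (K <= k <= L)%N -> r ^+ k * ((d%:R : rat) ^+ L / (n%:R) ^+ K) = (n ^ (k - K) * d ^ (L - k))%:R.
Proof.
move=> -> n0 d0 /andP [Kk kL].
have nz : (n%:R : rat) != 0 by rewrite pnatr_eq0 -lt0n.
have dz : (d%:R : rat) != 0 by rewrite pnatr_eq0 -lt0n.
rewrite natrM !natrX.
have e1 : (n%:R : rat) ^+ k = n%:R ^+ K * n%:R ^+ (k - K) by rewrite -exprD subnKC.
have e2 : (d%:R : rat) ^+ L = d%:R ^+ k * d%:R ^+ (L - k) by rewrite -exprD subnKC.
rewrite expr_div_n e1 e2.
have nK : (n%:R : rat) ^+ K != 0 by rewrite expf_neq0.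
have dk : (d%:R : rat) ^+ k != 0 by rewrite expf_neq0.
by field; apply/andP.
Qed.

Lemma sum_conv (r : rat) (n d K L : nat) s : r = n%:R / d%:R -> (0 < n)%N -> (0 < d)%N ->
  (forall k, k \in s -> K <= k <= L)%N ->
  sumr r s * ((d%:R : rat) ^+ L / (n%:R) ^+ K) = (sumN n d K L s)%:R.
Proof.
move=> hr n0 d0 H; rewrite /sumr /sumN big_distrl natr_sum /=.
by apply: eq_big_seq => k ks; apply: term_conv => //; apply: H.
Qed.

Lemma cancel_mod (a q c c' A A' : nat) : (c * a + A = c' * a + A')%N ->
  (q %| A)%N -> (q %| A')%N -> coprime q a -> (c < q)%N -> (c' < q)%N -> c = c'.
Proof.
wlog le : c c' A A' / (c' <= c)%N.
  move=> W E qA qA' co cq cq'; case: (leqP c' c) => h; first by apply: (W c c' A A').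
  by symmetry; apply: (W c' c A' A) => //; apply: ltnW.
move=> E qA qA' co cq cq'.
have E2 : ((c - c') * a + A = A')%N.
  by apply/eqP; rewrite -(eqn_add2l (c' * a)) addnA -mulnDl subnKC // E.
have : (q %| (c - c') * a)%N by rewrite -(dvdn_addl _ qA) E2.
rewrite Gauss_dvdl // => dv.
case: (posnP (c - c')) => h; first by apply/eqP; rewrite eqn_leq le -subn_eq0 h.
have := dvdn_leq h dv; lia.
Qed.

Lemma max_in (s : seq nat) : s != [::] -> exists2 K, K \in s & forall k, k \in s -> (k <= K)%N.
Proof.
elim: s => [|x s IH] //= _.
case: s IH => [|y s] IH.
  by exists x; rewrite ?inE ?eqxx // => k; rewrite inE => /eqP ->.
have [K Ks HK] := IH isT.
case: (leqP x K) => h.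
  exists K; first by rewrite inE Ks orbT.
  by move=> k; rewrite inE => /orP [/eqP ->|/HK].
exists x; first by rewrite inE eqxx.
move=> k; rewrite inE => /orP [/eqP ->//|/HK]; lia.
Qed.

Lemma min_in (s : seq nat) : s != [::] -> exists2 K, K \in s & forall k, k \in s -> (K <= k)%N.
Proof.
elim: s => [|x s IH] //= _.
case: s IH => [|y s] IH.
  by exists x; rewrite ?inE ?eqxx // => k; rewrite inE => /eqP ->.
have [K Ks HK] := IH isT.
case: (leqP K x) => h.
  exists K; first by rewrite inE Ks orbT.
  by move=> k; rewrite inE => /orP [/eqP ->|/HK].
exists x; first by rewrite inE eqxx.
move=> k; rewrite inE => /orP [/eqP ->//|/HK]; lia.
Qed.

Lemma filter_pred1_nseq (s : seq nat) K : [seq k <- s | k == K] = nseq (count_mem K s) K.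
Proof.
elim: s => [|x s IH] //=; rewrite IH; case: eqP => [->|] /=; first by [].
by move=> _.
Qed.

Lemma decomp (s : seq nat) K : perm_eq s (nseq (count_mem K s) K ++ [seq k <- s | k != K]).
Proof.
rewrite -filter_pred1_nseq perm_sym.
by have := perm_filterC (pred1 K) s => /permPl.
Qed.

Lemma sumr_cat r s1 s2 : sumr r (s1 ++ s2) = sumr r s1 + sumr r s2.
Proof. by rewrite /sumr big_cat. Qed.

Lemma sumr_nseq r c K : sumr r (nseq c K) = c%:R * r ^+ K.
Proof.
elim: c => [|c IH]; first by rewrite /sumr big_nil mul0r.
by rewrite /sumr /= big_cons -/(sumr r _) IH mulrSr mulrDl mul1r addrC.
Qed.

Lemma sumr_perm r s s' : perm_eq s s' -> sumr r s = sumr r s'.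
Proof. by move=> p; rewrite /sumr (perm_big _ p). Qed.

Lemma count_filter_le (s : seq nat) p k : (count_mem k [seq x <- s | p x] <= count_mem k s)%N.
Proof. by rewrite count_filter; apply: sub_count => x /andP []. Qed.

Lemma least_ex (P : nat -> Prop) m : P m -> exists j, P j /\ forall i, (i < j)%N -> ~ P i.
Proof.
elim/ltn_ind: m => m IH Pm.
case: (classic (exists i, (i < m)%N /\ P i)) => [[i [im Pi]]|H].
  exact: IH i im Pi.
by exists m; split => // i im Pi; apply: H; exists i.
Qed.

Lemma prev_ex (N : nat -> Prop) dl : N 0%N -> N dl -> (0 < dl)%N ->
  (forall a b, N a -> N b -> N (a + b)%N) -> forall K, (0 < K)%N ->
  exists j, [/\ (j < K)%N, N j, (K <= j + dl)%N & forall i, (j < i < K)%N -> ~ N i].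
Proof.
move=> N0 Nd d0 Nadd.
have aux : forall t, exists j, [/\ (j <= t)%N, N j & forall i, (j < i <= t)%N -> ~ N i].
  elim => [|t [j [jt Nj H]]]; first by exists 0%N; split => // i; lia.
  case: (classic (N t.+1)) => Nt.
    by exists t.+1; split => // i; lia.
  exists j; split => //; first lia.
  move=> i /andP [ji]; rewrite leq_eqVlt => /orP [/eqP -> //|it].
  by apply: H; rewrite ji.
move=> K K0; have [j [jt Nj H]] := aux K.-1.
exists j; split => //; first lia.
  rewrite leqNgt; apply/negP => lt.
  by apply: (H (j + dl)%N); [lia | apply: Nadd].
by move=> i /andP [ji iK]; apply: H; lia.
Qed.

Lemma next_ex (N : nat -> Prop) dl : N dl -> (0 < dl)%N ->
  (forall a b, N a -> N b -> N (a + b)%N) -> forall K, N K ->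
  exists j, [/\ (K < j)%N, N j, (j <= K + dl)%N & forall i, (K < i < j)%N -> ~ N i].
Proof.
move=> Nd d0 Nadd K NK.
have h0 : (K < K + dl)%N /\ N (K + dl) by split; [lia | apply: Nadd].
have [j [[Kj Nj] H]] := least_ex (fun j => (K < j)%N /\ N j) (K + dl) h0.
exists j; split => //.
  rewrite leqNgt; apply/negP => lt; apply: (H (K + dl)%N lt h0).
by move=> i /andP [Ki ij] Ni; apply: (H i ij); split.
Qed.

Definition allN (N : nat -> Prop) (s : seq nat) := forall k, k \in s -> N k.
Definition irrL (N : nat -> Prop) (d dl : nat) (s : seq nat) :=
  forall k m, N k -> (0 < m)%N -> (m <= dl)%N -> (m <= k)%N -> N (k - m)%N -> (count_mem k s < d ^ m)%N.
Definition irrR (N : nat -> Prop) (n dl : nat) (s : seq nat) :=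
  forall k m, N k -> (0 < m)%N -> (m <= dl)%N -> N (k + m)%N -> (count_mem k s < n ^ m)%N.

Lemma count_pos (s : seq nat) K : K \in s -> (0 < count_mem K s)%N.
Proof. by move=> Ks; rewrite lt0n; apply/negP => /eqP /count_memPn; rewrite Ks. Qed.

Lemma uniqL (r : rat) (n d : nat) (N : nat -> Prop) dl :
  r = n%:R / d%:R -> (0 < n)%N -> (0 < d)%N -> coprime n d ->
  N 0%N -> N dl -> (0 < dl)%N -> (forall a b, N a -> N b -> N (a + b)%N) ->
  forall s s', allN N s -> allN N s' -> irrL N d dl s -> irrL N d dl s' ->
  sumr r s = sumr r s' -> perm_eq s s'.
Proof.
move=> hr n0 d0 cop N0 Nd dl0 Nadd s s'.
move: {2}(size s + size s')%N (leqnn (size s + size s')%N) => m.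
elim: m s s' => [|m IH] s s' hm As As' Is Is' E.
  by case: s s' hm {As As' Is Is' E} => [|x s] [|y s'].
case: (eqVneq (s ++ s') [::]) => [/eqP|ne].
  by rewrite -size_eq0 size_cat => /eqP h; case: s s' h {As As' Is Is' E hm} => [|x s] [|y s'].
have [K KS HK] := max_in (s ++ s') ne.
have NK : N K by move: KS; rewrite mem_cat => /orP [/As|/As'].
set c := count_mem K s; set c' := count_mem K s'.
set s1 := [seq k <- s | k != K]; set s1' := [seq k <- s' | k != K].
have ps := decomp s K; have ps' := decomp s' K.
have Es := sumr_perm r _ _ ps; rewrite sumr_cat sumr_nseq in Es.
have Es' := sumr_perm r _ _ ps'; rewrite sumr_cat sumr_nseq in Es'.
have lt1 : forall t, {subset t <= s ++ s'} -> forall k, k \in [seq k <- t | k != K] -> (k < K)%N.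
  move=> t sub k; rewrite mem_filter => /andP [kK kt].
  by rewrite ltn_neqAle kK HK // sub.
have lt1s := lt1 s (fun k ks => etrans (mem_cat k s s') (introT orP (or_introl ks))).
have lt1s' := lt1 s' (fun k ks => etrans (mem_cat k s s') (introT orP (or_intror ks))).
have cc : c = c'.
  case: (posnP K) => K0.
    have nil1 : forall t : seq nat, (forall k, k \in t -> (k < K)%N) -> t = [::].
      by move=> [|k t] // H; have := H k; rewrite inE eqxx K0 => /(_ isT).
    move: E; rewrite Es Es' (nil1 _ lt1s) (nil1 _ lt1s') /sumr !big_nil !addr0 K0 !expr0 !mulr1.
    by move/eqP; rewrite eqr_nat /c /c' K0 => /eqP.
  have [j [jK Nj Kj Hj]] := prev_ex N dl N0 Nd dl0 Nadd K K0.
  have le1 : forall t : seq nat, (forall k, k \in t -> (k < K)%N) -> allN N t -> forall k, k \in t -> (k <= j)%N.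
    move=> t H At k kt; rewrite leqNgt; apply/negP => jk.
    by apply: (Hj k); [rewrite jk H | apply: At].
  have As1 : allN N s1 by move=> k; rewrite mem_filter => /andP [_ /As].
  have As1' : allN N s1' by move=> k; rewrite mem_filter => /andP [_ /As'].
  set X := ((d%:R : rat) ^+ K / (n%:R) ^+ 0).
  have E2 := congr1 (fun y => y * X) E; rewrite /= Es Es' !mulrDl -!mulrA in E2.
  have tK : r ^+ K * X = (n ^ (K - 0) * d ^ (K - K))%:R by apply: term_conv => //; rewrite leqnn.
  rewrite tK !sum_conv // in E2; last 2 first.
  - by move=> k ks; rewrite leq0n ltnW // lt1s'.
  - by move=> k ks; rewrite leq0n ltnW // lt1s.
  move: E2; rewrite -!natrM -!natrD => /eqP; rewrite eqr_nat => /eqP E2.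
  have dvA : forall t : seq nat, (forall k, k \in t -> (k < K)%N) -> allN N t ->
      (d ^ (K - j) %| sumN n d 0 K t)%N.
    move=> t H At; rewrite /sumN big_seq_cond; apply: dvdn_sum => k /andP [kt _].
    by apply: dvdn_mull; apply: dvdn_exp2l; have := le1 t H At k kt; lia.
  have cq : forall t : seq nat, irrL N d dl t -> (count_mem K t < d ^ (K - j))%N.
    move=> t It; apply: It => //; try lia.
    by rewrite subKn // ltnW.
  apply: (cancel_mod _ _ _ _ _ _ E2 (dvA _ lt1s As1) (dvA _ lt1s' As1')) => //; last first.
  - exact: cq.
  - exact: cq.
  rewrite subnn expn0 muln1 subn0; apply: coprimeXl; apply: coprimeXr; by rewrite coprime_sym.
have cpos : (0 < c)%N.
  move: KS; rewrite mem_cat => /orP [/count_pos //|/count_pos]; by rewrite cc.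
have As1 : allN N s1 by move=> k; rewrite mem_filter => /andP [_ /As].
have As1' : allN N s1' by move=> k; rewrite mem_filter => /andP [_ /As'].
have Is1 : forall t, irrL N d dl t -> irrL N d dl [seq k <- t | k != K].
  move=> t It k m0 Nk m1 m2 m3 m4; apply: leq_ltn_trans (It k m0 Nk m1 m2 m3 m4).
  exact: count_filter_le.
have sz := perm_size ps; have sz' := perm_size ps'.
rewrite size_cat size_nseq in sz; rewrite size_cat size_nseq in sz'.
have P1 : perm_eq s1 s1'.
  apply: IH => //; try exact: Is1.
    have z1 : (size s = c + size s1)%N by [].
    have z2 : (size s' = c' + size s1')%N by [].
    rewrite -ltnS; apply: leq_trans hm; rewrite z1 z2 -cc -addSn.
    by apply: leq_add; [rewrite addnC -addn1 leq_add2l | apply: leq_addl].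
  have : c%:R * r ^+ K + sumr r s1 = c'%:R * r ^+ K + sumr r s1' by rewrite -Es -Es'.
  by rewrite cc => /addrI.
apply: (perm_trans ps); rewrite perm_sym; apply: (perm_trans ps').
by rewrite -/c -/c' cc perm_cat2l perm_sym.
Qed.

Lemma uniqR (r : rat) (n d : nat) (N : nat -> Prop) dl :
  r = n%:R / d%:R -> (0 < n)%N -> (0 < d)%N -> coprime n d ->
  N 0%N -> N dl -> (0 < dl)%N -> (forall a b, N a -> N b -> N (a + b)%N) ->
  forall s s', allN N s -> allN N s' -> irrR N n dl s -> irrR N n dl s' ->
  sumr r s = sumr r s' -> perm_eq s s'.
Proof.
move=> hr n0 d0 cop N0 Nd dl0 Nadd s s'.
move: {2}(size s + size s')%N (leqnn (size s + size s')%N) => m.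
elim: m s s' => [|m IH] s s' hm As As' Is Is' E.
  by case: s s' hm {As As' Is Is' E} => [|x s] [|y s'].
case: (eqVneq (s ++ s') [::]) => [/eqP|ne].
  by rewrite -size_eq0 size_cat => /eqP h; case: s s' h {As As' Is Is' E hm} => [|x s] [|y s'].
have [K KS HK] := min_in (s ++ s') ne.
have [L LS HL] := max_in (s ++ s') ne.
have NK : N K by move: KS; rewrite mem_cat => /orP [/As|/As'].
set c := count_mem K s; set c' := count_mem K s'.
set s1 := [seq k <- s | k != K]; set s1' := [seq k <- s' | k != K].
have ps := decomp s K; have ps' := decomp s' K.
have Es := sumr_perm r _ _ ps; rewrite sumr_cat sumr_nseq in Es.
have Es' := sumr_perm r _ _ ps'; rewrite sumr_cat sumr_nseq in Es'.
have lt1 : forall t, {subset t <= s ++ s'} -> forall k, k \in [seq k <- t | k != K] -> (K < k <= L)%N.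
  move=> t sub k; rewrite mem_filter => /andP [kK kt].
  by rewrite ltn_neqAle eq_sym kK HK ?HL // sub.
have lt1s := lt1 s (fun k ks => etrans (mem_cat k s s') (introT orP (or_introl ks))).
have lt1s' := lt1 s' (fun k ks => etrans (mem_cat k s s') (introT orP (or_intror ks))).
have As1 : allN N s1 by move=> k; rewrite mem_filter => /andP [_ /As].
have As1' : allN N s1' by move=> k; rewrite mem_filter => /andP [_ /As'].
have cc : c = c'.
  have [j [Kj Nj jK Hj]] := next_ex N dl Nd dl0 Nadd K NK.
  have le1 : forall t : seq nat, (forall k, k \in t -> (K < k <= L)%N) -> allN N t -> forall k, k \in t -> (j <= k)%N.
    move=> t H At k kt; rewrite leqNgt; apply/negP => jk.
    have := H k kt => /andP [Kk _].
    by apply: (Hj k); [rewrite jk Kk | apply: At].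
  set X := ((d%:R : rat) ^+ L / (n%:R) ^+ K).
  have E2 := congr1 (fun y => y * X) E; rewrite /= Es Es' !mulrDl -!mulrA in E2.
  have KL : (K <= L)%N by apply: HL.
  have tK : r ^+ K * X = (n ^ (K - K) * d ^ (L - K))%:R by apply: term_conv => //; rewrite leqnn.
  rewrite tK !sum_conv // in E2; last 2 first.
  - by move=> k ks; have := lt1s' k ks => /andP [h1 h2]; rewrite h2 ltnW.
  - by move=> k ks; have := lt1s k ks => /andP [h1 h2]; rewrite h2 ltnW.
  move: E2; rewrite -!natrM -!natrD => /eqP; rewrite eqr_nat => /eqP E2.
  have dvA : forall t : seq nat, (forall k, k \in t -> (K < k <= L)%N) -> allN N t ->
      (n ^ (j - K) %| sumN n d K L t)%N.
    move=> t H At; rewrite /sumN big_seq_cond; apply: dvdn_sum => k /andP [kt _].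
    by apply: dvdn_mulr; apply: dvdn_exp2l; have := le1 t H At k kt; lia.
  have cq : forall t : seq nat, irrR N n dl t -> (count_mem K t < n ^ (j - K))%N.
    move=> t It; apply: It => //; try lia.
    by rewrite subnKC // ltnW.
  apply: (cancel_mod _ _ _ _ _ _ E2 (dvA _ lt1s As1) (dvA _ lt1s' As1')) => //; last first.
  - exact: cq.
  - exact: cq.
  rewrite subnn expn0 mul1n; apply: coprimeXl; by apply: coprimeXr.
have cpos : (0 < c)%N.
  move: KS; rewrite mem_cat => /orP [/count_pos //|/count_pos]; by rewrite cc.
have Is1 : forall t, irrR N n dl t -> irrR N n dl [seq k <- t | k != K].
  move=> t It k m0 Nk m1 m2 m3; apply: leq_ltn_trans (It k m0 Nk m1 m2 m3).
  exact: count_filter_le.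
have sz := perm_size ps; have sz' := perm_size ps'.
rewrite size_cat size_nseq in sz; rewrite size_cat size_nseq in sz'.
have P1 : perm_eq s1 s1'.
  apply: IH => //; try exact: Is1.
    have z1 : (size s = c + size s1)%N by [].
    have z2 : (size s' = c' + size s1')%N by [].
    rewrite -ltnS; apply: leq_trans hm; rewrite z1 z2 -cc -addSn.
    by apply: leq_add; [rewrite addnC -addn1 leq_add2l | apply: leq_addl].
  have : c%:R * r ^+ K + sumr r s1 = c'%:R * r ^+ K + sumr r s1' by rewrite -Es -Es'.
  by rewrite cc => /addrI.
apply: (perm_trans ps); rewrite perm_sym; apply: (perm_trans ps').
by rewrite -/c -/c' cc perm_cat2l perm_sym.
Qed.

Definition fact (r : rat) (s : seq nat) : seq rat := [seq r ^+ k | k <- s].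

Lemma fact_is (M : rat -> Prop) r N s : (forall k, N k -> is_atom M (r ^+ k)) -> allN N s ->
  is_factorization M (sumr r s) (fact r s).
Proof.
move=> At As; split; last by rewrite /fact big_map.
by move=> a /mapP [k ks ->]; apply: At; apply: As.
Qed.

Lemma extract (s : seq nat) k c : (c <= count_mem k s)%N -> exists w, perm_eq s (nseq c k ++ w).
Proof.
move=> le; exists (nseq (count_mem k s - c) k ++ [seq x <- s | x != k]).
by rewrite catA -nseqD subnKC //; apply: decomp.
Qed.

Lemma move_step (M : rat -> Prop) r N (bd : nat) s w A k B k2 :
  (forall k, N k -> is_atom M (r ^+ k)) -> allN N s -> N k2 ->
  perm_eq s (nseq A k ++ w) -> A%:R * r ^+ k = B%:R * r ^+ k2 ->
  (A <= bd)%N -> (B <= bd)%N ->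
  [/\ allN N (nseq B k2 ++ w), sumr r (nseq B k2 ++ w) = sumr r s &
      n_chain M (sumr r s) bd (fact r s) (fact r (nseq B k2 ++ w))].
Proof.
move=> At As Nk2 ps E Ab Bb.
have Aw : allN N (nseq B k2 ++ w).
  move=> x; rewrite mem_cat => /orP [/nseqP [-> _] //|xw]; apply: As.
  by rewrite (perm_mem ps) mem_cat xw orbT.
have Es : sumr r (nseq B k2 ++ w) = sumr r s.
  by rewrite (sumr_perm r _ _ ps) !sumr_cat !sumr_nseq E.
split => //; apply: chain_step; first by rewrite -Es; exact: (fact_is M r N _ At Aw).
have pf : perm_eq (fact r s) (fact r (nseq A k ++ w)) by apply: perm_map.
rewrite (fdist_perm_l _ _ _ pf) /fact !map_cat !map_nseq.
apply: leq_trans (fdist_move _ _ _) _; rewrite !size_nseq geq_max Ab Bb //.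
Qed.

Lemma reduce (M : rat -> Prop) r N (bd : nat) (P : seq nat -> Prop) :
  (forall k, N k -> is_atom M (r ^+ k)) ->
  (forall s, allN N s -> ~ P s -> exists t, [/\ allN N t, sumr r t = sumr r s, (size t < size s)%N &
       n_chain M (sumr r s) bd (fact r s) (fact r t)]) ->
  forall s, allN N s -> exists t, [/\ allN N t, P t, sumr r t = sumr r s &
       n_chain M (sumr r s) bd (fact r s) (fact r t)].
Proof.
move=> At H s.
move: {2}(size s) (leqnn (size s)) => m; elim: m s => [|m IH] s hm As.
  case: (classic (P s)) => Ps; first by exists s; split => //; apply: chain_refl.
  by have [t [_ _ lt _]] := H s As Ps; move: lt hm; case: (size s).
case: (classic (P s)) => Ps; first by exists s; split => //; apply: chain_refl.
have [t [At' Et lt ch]] := H s As Ps.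
have [u [Au Pu Eu ch2]] := IH t (leq_trans (leq_trans lt hm) (leqnn _) : (size t <= m)%N) At'.
exists u; split => //; first by rewrite Eu.
by apply: chain_trans ch _; rewrite -Et.
Qed.

Lemma r_nd (r : rat) : 0 < r -> r = (`|numq r|%N)%:R / (`|denq r|%N)%:R.
Proof.
move=> r0; rewrite -{1}(divq_num_den r).
have h1 : (0 <= numq r)%R by rewrite numq_ge0 ltW.
rewrite -[numq r]gez0_abs // -[denq r]gez0_abs ?ltW //.
Qed.

Lemma sumr_nonneg r s : 0 <= r -> 0 <= sumr r s.
Proof. by move=> r0; rewrite /sumr; apply: sumr_ge0 => k _; apply: exprn_ge0. Qed.

Lemma term_le_sum r s j : 0 <= r -> j \in s -> r ^+ j <= sumr r s.
Proof.
move=> r0 js; rewrite (sumr_perm r _ _ (perm_to_rem js)) /sumr big_cons -/(sumr r _).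
by rewrite lerDl sumr_nonneg.
Qed.

Lemma sumr_pos r s : 0 < r -> s != [::] -> 0 < sumr r s.
Proof.
move=> r0; case: s => [|k s] // _; rewrite /sumr big_cons -/(sumr r _).
by rewrite ltr_pwDl ?exprn_gt0 ?sumr_nonneg ?ltW.
Qed.

Lemma atom_form r N a : 0 < r -> is_atom (S_rN r N) a -> exists k, N k /\ a = r ^+ k.
Proof.
move=> r0 [[s [As ->]] a0 H].
case: s As a0 H => [|k s] As a0 H; first by rewrite big_nil eqxx in a0.
have Sk : S_rN r N (r ^+ k) by exists [:: k]; split; [move=> j; rewrite inE => /eqP -> ; apply: As; rewrite inE eqxx | rewrite big_seq1].
have Ss : S_rN r N (sumr r s) by exists s; split => // j js; apply: As; rewrite inE js orbT.
exists k; split; first by apply: As; rewrite inE eqxx.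
rewrite big_cons; case: (H _ _ Sk Ss); first by rewrite big_cons.
  by move/eqP; rewrite expf_eq0 (gt_eqF r0) andbF.
by rewrite /sumr => ->; rewrite addr0.
Qed.

Lemma fact_of r N x z : 0 < r -> is_factorization (S_rN r N) x z ->
  exists s, [/\ allN N s, z = fact r s & sumr r s = x].
Proof.
move=> r0 [Az Ez]; elim: z x Az Ez => [|a z IH] x Az Ez.
  by exists [::]; split => //; rewrite -Ez /sumr !big_nil.
have [k [Nk ak]] := atom_form r N a r0 (Az a (mem_head _ _)); subst a.
have Az' : forall b, b \in z -> is_atom (S_rN r N) b by move=> b bz; apply: Az; rewrite inE bz orbT.
have Ez' : \sum_(b <- z) b = x - r ^+ k.
  by rewrite -Ez big_cons addrAC subrr add0r.
have [s [As -> Es]] := IH (x - r ^+ k) Az' Ez'.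
exists (k :: s); split => //.
  by move=> j; rewrite inE => /orP [/eqP ->|/As].
by rewrite /sumr big_cons -/(sumr r s) Es addrC subrK.
Qed.

Lemma coprime_dvd1 (a b : nat) : coprime a b -> (a %| b)%N -> a = 1%N.
Proof. by move=> /eqP co /gcdn_idPl; rewrite co. Qed.

Lemma S_single r N k : N k -> S_rN r N (r ^+ k).
Proof.
move=> Nk; exists [:: k]; split; last by rewrite big_seq1.
by move=> j; rewrite inE => /eqP ->.
Qed.

Lemma atom_pow (r : rat) (n d : nat) N k : r = n%:R / d%:R -> (1 < n)%N -> (1 < d)%N ->
  coprime n d -> N k -> is_atom (S_rN r N) (r ^+ k).
Proof.
move=> hr n1 d1 cop Nk.
have nz : (n%:R : rat) != 0 by rewrite pnatr_eq0; case: n n1 {hr cop}.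
have dz : (d%:R : rat) != 0 by rewrite pnatr_eq0; case: d d1 {hr cop}.
have r0 : 0 < r by rewrite hr divr_gt0 // ltr0n; [case: n n1 {hr cop nz} | case: d d1 {hr cop dz}].
split; first exact: S_single; first by rewrite expf_neq0 // gt_eqF.
move=> b c [s1 [As1 ->]] [s2 [As2 ->]] E.
rewrite -/(sumr r s1) -/(sumr r s2) in E *.
case: (eqVneq s1 [::]) => [->|ne1]; first by left; rewrite /sumr big_nil.
case: (eqVneq s2 [::]) => [->|ne2]; first by right; rewrite /sumr big_nil.
exfalso.
set s := s1 ++ s2.
have Es : r ^+ k = sumr r s by rewrite E sumr_cat.
have ne : s != [::] by rewrite /s; move: ne1; case: (s1).
have lt : forall j, j \in s -> r ^+ j < r ^+ k.
  move=> j; rewrite mem_cat => /orP [] js.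
    apply: le_lt_trans (term_le_sum r s1 j (ltW r0) js) _.
    by rewrite E ltrDl sumr_pos.
  apply: le_lt_trans (term_le_sum r s2 j (ltW r0) js) _.
  by rewrite E ltrDr sumr_pos.
have [L Ls HL] := max_in s ne.
case: (ltngtP n d) => nd.
-
  have r1 : r < 1 by rewrite hr ltr_pdivrMr ?ltr0n ?mul1r ?ltr_nat //; case: d d1 {hr cop dz nd}.
  have gt : forall j, j \in s -> (k < j)%N.
    by move=> j js; have := lt j js; rewrite ltr_iXn2l.
  have kL : (k <= L)%N by apply: ltnW; apply: gt.
  have := congr1 (fun y => y * ((d%:R : rat) ^+ L / (n%:R) ^+ k)) Es => /=.
  rewrite term_conv ?leqnn ?kL //; try by case: n n1 {hr cop nz nd}.
    2: by case: d d1 {hr cop dz nd}.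
  rewrite sum_conv //; first last.
  + by move=> j js; rewrite HL // ltnW // gt.
  + by case: d d1 {hr cop dz nd r1}.
  + by case: n n1 {hr cop nz nd r1}.
  move/eqP; rewrite eqr_nat subnn expn0 mul1n => /eqP E2.
  have : (n %| d ^ (L - k))%N.
    rewrite E2 /sumN big_seq_cond; apply: dvdn_sum => j /andP [js _].
    by apply: dvdn_mulr; apply: dvdn_exp => //; rewrite subn_gt0 gt.
  move/(coprime_dvd1 _ _ (coprimeXr _ cop)) => n_1; by rewrite n_1 in n1.
-
  have r1 : 1 < r by rewrite hr ltr_pdivlMr ?ltr0n ?mul1r ?ltr_nat //; case: d d1 {hr cop dz nd}.
  have gt : forall j, j \in s -> (j < k)%N.
    by move=> j js; have := lt j js; rewrite ltr_eXn2l.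
  have := congr1 (fun y => y * ((d%:R : rat) ^+ k / (n%:R) ^+ 0)) Es => /=.
  rewrite term_conv ?leqnn ?leq0n //; try by case: n n1 {hr cop nz nd}.
    2: by case: d d1 {hr cop dz nd}.
  rewrite sum_conv //; first last.
  + by move=> j js; rewrite leq0n ltnW // gt.
  + by case: d d1 {hr cop dz nd r1}.
  + by case: n n1 {hr cop nz nd r1}.
  move/eqP; rewrite eqr_nat subnn expn0 muln1 => /eqP E2.
  have : (d %| n ^ (k - 0))%N.
    rewrite E2 /sumN big_seq_cond; apply: dvdn_sum => j /andP [js _].
    by apply: dvdn_mull; apply: dvdn_exp => //; rewrite subn_gt0 gt.
  rewrite coprime_sym in cop.
  move/(coprime_dvd1 _ _ (coprimeXr _ cop)) => d_1; by rewrite d_1 in d1.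
- by move: cop; rewrite nd /coprime gcdnn => /eqP d_1; by rewrite d_1 in d1.
Qed.

Lemma idL (r : rat) (n d k m : nat) : r = n%:R / d%:R -> (0 < d)%N -> (m <= k)%N ->
  (d ^ m)%:R * r ^+ k = (n ^ m)%:R * r ^+ (k - m).
Proof.
move=> hr d0 mk.
have dz : (d%:R : rat) != 0 by rewrite pnatr_eq0 -lt0n.
rewrite -{1}(subnKC mk) exprD; set t := r ^+ (k - m).
rewrite hr expr_div_n !natrX.
by field; rewrite expf_neq0.
Qed.

Lemma idR (r : rat) (n d k m : nat) : r = n%:R / d%:R -> (0 < d)%N ->
  (n ^ m)%:R * r ^+ k = (d ^ m)%:R * r ^+ (k + m).
Proof.
move=> hr d0.
have dz : (d%:R : rat) != 0 by rewrite pnatr_eq0 -lt0n.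
rewrite exprD; set t := r ^+ k.
rewrite hr expr_div_n !natrX.
by field; rewrite expf_neq0.
Qed.

Lemma bound_le (a M m dl : nat) : (a <= M)%N -> (0 < M)%N -> (m <= dl)%N -> (a ^ m <= M ^ dl)%N.
Proof.
move=> aM M0 mdl; apply: leq_trans (leq_pexp2l M0 mdl).
elim: m {mdl} => [|m IH] //; rewrite !expnS; exact: leq_mul.
Qed.

Lemma stepL (r : rat) (n d : nat) N dl :
  r = n%:R / d%:R -> (0 < n)%N -> (n < d)%N ->
  (forall k, N k -> is_atom (S_rN r N) (r ^+ k)) ->
  forall s, allN N s -> ~ irrL N d dl s -> exists t, [/\ allN N t, sumr r t = sumr r s, (size t < size s)%N &
       n_chain (S_rN r N) (sumr r s) (maxn n d ^ dl) (fact r s) (fact r t)].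
Proof.
move=> hr n0 nd At s As nI.
have [k [m [Nk [m0 [mdl [mk [Nkm le]]]]]]] : exists k m, N k /\ (0 < m)%N /\ (m <= dl)%N /\ (m <= k)%N /\
   N (k - m)%N /\ (d ^ m <= count_mem k s)%N.
  apply: NNPP => H; apply: nI => k m Nk m0 mdl mk Nkm; rewrite ltnNge; apply/negP => le.
  by apply: H; exists k, m.
have [w ps] := extract s k (d ^ m) le.
have d0 : (0 < d)%N by apply: leq_ltn_trans nd.
have M0 : (0 < maxn n d)%N by rewrite leq_max n0.
have [H1 H2 H3] := move_step (S_rN r N) r N (maxn n d ^ dl) s w (d ^ m) k (n ^ m) (k - m) At As Nkm ps
  (idL r n d k m hr d0 mk) (bound_le _ _ _ _ (leq_maxr n d) M0 mdl) (bound_le _ _ _ _ (leq_maxl n d) M0 mdl).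
exists (nseq (n ^ m)%N (k - m)%N ++ w); split => //.
by rewrite (perm_size ps) !size_cat !size_nseq ltn_add2r ltn_exp2r.
Qed.

Lemma stepR (r : rat) (n d : nat) N dl :
  r = n%:R / d%:R -> (0 < d)%N -> (d < n)%N ->
  (forall k, N k -> is_atom (S_rN r N) (r ^+ k)) ->
  forall s, allN N s -> ~ irrR N n dl s -> exists t, [/\ allN N t, sumr r t = sumr r s, (size t < size s)%N &
       n_chain (S_rN r N) (sumr r s) (maxn n d ^ dl) (fact r s) (fact r t)].
Proof.
move=> hr d0 dn At s As nI.
have [k [m [Nk [m0 [mdl [Nkm le]]]]]] : exists k m, N k /\ (0 < m)%N /\ (m <= dl)%N /\
   N (k + m)%N /\ (n ^ m <= count_mem k s)%N.
  apply: NNPP => H; apply: nI => k m Nk m0 mdl Nkm; rewrite ltnNge; apply/negP => le.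
  by apply: H; exists k, m.
have [w ps] := extract s k (n ^ m) le.
have M0 : (0 < maxn n d)%N by rewrite leq_max d0 orbT.
have [H1 H2 H3] := move_step (S_rN r N) r N (maxn n d ^ dl) s w (n ^ m) k (d ^ m) (k + m) At As Nkm ps
  (idR r n d k m hr d0) (bound_le _ _ _ _ (leq_maxl n d) M0 mdl) (bound_le _ _ _ _ (leq_maxr n d) M0 mdl).
exists (nseq (d ^ m)%N (k + m)%N ++ w); split => //.
by rewrite (perm_size ps) !size_cat !size_nseq ltn_add2r ltn_exp2r.
Qed.

Lemma pow_ne1 (r : rat) (n d k : nat) : r = n%:R / d%:R -> (1 < n)%N -> (0 < d)%N ->
  coprime n d -> (0 < k)%N -> r ^+ k != 1.
Proof.
move=> hr n1 d0 cop k0; apply/negP => /eqP E.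
have dz : (d%:R : rat) ^+ k != 0 by rewrite expf_neq0 // pnatr_eq0 -lt0n.
move: E; rewrite hr expr_div_n => /divr1_eq /eqP; rewrite -!natrX eqr_nat eqn_exp2r // => /eqP nd.
by move: cop; rewrite nd /coprime gcdnn => /eqP d1; move: n1; rewrite nd d1.
Qed.

Lemma u_ones (r : rat) (n d : nat) N dl su : r = n%:R / d%:R -> (0 < n)%N -> (0 < d)%N ->
  coprime n d -> (forall k, N k -> (0 < k)%N -> (dl <= k)%N) -> allN N su ->
  sumr r su = (n ^ dl)%:R -> 0%N \in su -> perm_eq su (nseq (n ^ dl) 0%N).
Proof.
move=> hr n0 d0 cop Nmin As E zs.
have r0 : 0 < r by rewrite hr divr_gt0 // ltr0n.
have ps := decomp su 0%N.
set c := count_mem 0%N su in ps; set s1 := [seq k <- su | k != 0%N] in ps.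
have Es := sumr_perm r _ _ ps; rewrite sumr_cat sumr_nseq expr0 mulr1 E in Es.
case: (eqVneq s1 [::]) => [e1|ne].
  move: Es; rewrite e1 /sumr big_nil addr0 => /eqP; rewrite eqr_nat => /eqP Ec.
  by rewrite Ec; rewrite e1 cats0 in ps.
exfalso.
have [L Ls HL] := max_in s1 ne.
have s1N : forall k, k \in s1 -> (dl <= k <= L)%N.
  move=> k ks; rewrite HL // andbT; move: ks; rewrite mem_filter => /andP [k0 ks].
  by apply: Nmin; [apply: As | rewrite lt0n].
have cpos : (0 < c)%N by apply: count_pos.
have cle : (c <= n ^ dl)%N.
  by rewrite -(ler_nat rat) Es lerDl sumr_nonneg // ltW.
have E1 : sumr r s1 = (n ^ dl - c)%:R by rewrite natrB // Es addrC addKr.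
have := sum_conv r n d 0 L s1 hr n0 d0 (fun k ks => introT andP (conj (leq0n k) (proj2 (andP (s1N k ks))))).
rewrite E1 expr0 divr1 -natrX -natrM => /eqP; rewrite eqr_nat => /eqP E2.
have : (n ^ dl %| (n ^ dl - c) * d ^ L)%N.
  rewrite E2 /sumN big_seq_cond; apply: dvdn_sum => k /andP [ks _].
  by apply: dvdn_mulr; apply: dvdn_exp2l; rewrite subn0; case/andP: (s1N k ks).
rewrite Gauss_dvdl; last by apply: coprimeXl; apply: coprimeXr.
case: (posnP (n ^ dl - c)) => h.
  by have := sumr_pos r s1 r0 ne; rewrite E1 h ltxx.
move/(dvdn_leq h); lia.
Qed.

Lemma sumr_le_size r s b : (forall k, k \in s -> r ^+ k <= b) -> sumr r s <= (size s)%:R * b.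
Proof.
elim: s => [|k s IH] H; first by rewrite /sumr big_nil mul0r.
rewrite /sumr big_cons -/(sumr r s) /= -natr1 mulrDl mul1r addrC.
by apply: lerD; [apply: IH => j js; apply: H; rewrite inE js orbT | apply: H; rewrite inE eqxx].
Qed.

Lemma upper (r : rat) (n d : nat) N dl : r = n%:R / d%:R -> (1 < n)%N -> (1 < d)%N ->
  coprime n d -> N 0%N -> N dl -> (0 < dl)%N -> (forall a b, N a -> N b -> N (a + b)%N) ->
  catenary_le (S_rN r N) (maxn n d ^ dl).
Proof.
move=> hr n1 d1 cop N0 Nd dl0 Nadd x z z' Sx fz fz'.
have n0 : (0 < n)%N by apply: ltnW.
have d0 : (0 < d)%N by apply: ltnW.
have r0 : 0 < r by rewrite hr divr_gt0 // ltr0n.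
have At : forall k, N k -> is_atom (S_rN r N) (r ^+ k) by move=> k Nk; exact: (atom_pow r n d N k hr n1 d1 cop Nk).
have [s [As -> Es]] := fact_of r N x z r0 fz.
have [s' [As' -> Es']] := fact_of r N x z' r0 fz'.
have fin : forall t, allN N t -> sumr r t = x -> n_chain (S_rN r N) x (maxn n d ^ dl) (fact r t) (fact r t) by move=> *; apply: chain_refl.
case: (boolP (n < d)%N) => nd.
  have st := stepL r n d N dl hr n0 nd At.
  have [t [At1 It Et ch]] := reduce (S_rN r N) r N (maxn n d ^ dl) (irrL N d dl) At st s As.
  have [t' [At1' It' Et' ch']] := reduce (S_rN r N) r N (maxn n d ^ dl) (irrL N d dl) At st s' As'.
  have pt : perm_eq t t' by apply: (uniqL r n d N dl) => //; rewrite Et Et' Es Es'.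
  rewrite Es in ch; rewrite Es' in ch'.
  apply: (chain_trans _ _ _ _ _ _ ch).
  apply: (chain_trans _ _ _ _ (fact r t')).
    apply: chain_perm; last by apply: perm_map.
    by rewrite -Es' -Et'; exact: (fact_is _ r N t' At At1').
  apply: chain_sym => //; by rewrite -Es'; exact: (fact_is _ r N s' At As').
have nd2 : (d < n)%N.
  rewrite -leqNgt in nd; rewrite ltn_neqAle nd andbT; apply/negP => /eqP e.
  by move: cop; rewrite e /coprime gcdnn => /eqP d_1; rewrite d_1 in n1.
have st := stepR r n d N dl hr d0 nd2 At.
  have [t [At1 It Et ch]] := reduce (S_rN r N) r N (maxn n d ^ dl) (irrR N n dl) At st s As.
  have [t' [At1' It' Et' ch']] := reduce (S_rN r N) r N (maxn n d ^ dl) (irrR N n dl) At st s' As'.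
  have pt : perm_eq t t' by apply: (uniqR r n d N dl) => //; rewrite Et Et' Es Es'.
  rewrite Es in ch; rewrite Es' in ch'.
  apply: (chain_trans _ _ _ _ _ _ ch).
  apply: (chain_trans _ _ _ _ (fact r t')).
    apply: chain_perm; last by apply: perm_map.
    by rewrite -Es' -Et'; exact: (fact_is _ r N t' At At1').
  apply: chain_sym => //; by rewrite -Es'; exact: (fact_is _ r N s' At As').
Qed.

Lemma fact_nseq r c k : fact r (nseq c k) = nseq c (r ^+ k).
Proof. by rewrite /fact map_nseq. Qed.

Lemma lower (r : rat) (n d : nat) N dl : r = n%:R / d%:R -> (1 < n)%N -> (1 < d)%N ->
  coprime n d -> N 0%N -> N dl -> (0 < dl)%N -> (forall k, N k -> (0 < k)%N -> (dl <= k)%N) ->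
  forall b, catenary_le (S_rN r N) b -> (maxn n d ^ dl <= b)%N.
Proof.
move=> hr n1 d1 cop N0 Nd dl0 Nmin b Hb.
have n0 : (0 < n)%N by apply: ltnW.
have d0 : (0 < d)%N by apply: ltnW.
have r0 : 0 < r by rewrite hr divr_gt0 // ltr0n.
have At : forall k, N k -> is_atom (S_rN r N) (r ^+ k) by move=> k Nk; exact: (atom_pow r n d N k hr n1 d1 cop Nk).
set x := sumr r (nseq (n ^ dl) 0%N).
have AN : allN N (nseq (n ^ dl) 0%N) by move=> k /nseqP [-> _].
have BN : allN N (nseq (d ^ dl) dl) by move=> k /nseqP [-> _].
have fA := fact_is _ r N _ At AN.
have fB := fact_is _ r N _ At BN.
have EB : sumr r (nseq (d ^ dl) dl) = x.
  by rewrite /x !sumr_nseq (idL r n d dl dl hr d0 (leqnn _)) subnn.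
rewrite EB in fB.
have Sx : S_rN r N x by exists (nseq (n ^ dl) 0%N).
have [zs [fzs [p l]]] := Hb x _ _ Sx fA fB.
have ndl : (0 < n ^ dl)%N by rewrite expn_gt0 n0.
have r1 : forall k, (0 < k)%N -> r ^+ k != 1 by move=> k; apply: (pow_ne1 r n d k hr n1 d0 cop).
have PA : (1 : rat) \in fact r (nseq (n ^ dl) 0%N) by rewrite fact_nseq expr0 mem_nseq ndl eqxx.
have PB : (1 : rat) \notin last (fact r (nseq (n ^ dl) 0%N)) zs.
  by rewrite l fact_nseq mem_nseq eq_sym (negPf (r1 dl dl0)) andbF.
have [u [v [Pu Pv uin vin euv]]] := path_cross _ _ (fun w : seq rat => (1 : rat) \in w) _ _ p PA PB.
have fu : is_factorization (S_rN r N) x u.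
  by move: uin; rewrite inE => /orP [/eqP ->|/fzs].
have fv := fzs v vin.
have [su [Asu esu Esu]] := fact_of r N x u r0 fu.
have [sv [Asv esv Esv]] := fact_of r N x v r0 fv.
have Ex : x = (n ^ dl)%:R by rewrite /x sumr_nseq expr0 mulr1.
have z0 : 0%N \in su.
  move: Pu; rewrite esu => /mapP [k ks e]; case: (posnP k) => k0; first by rewrite -k0.
  by move: (r1 k k0); rewrite -e eqxx.
have psu := u_ones r n d N dl su hr n0 d0 cop Nmin Asu (etrans Esu Ex) z0.
have pu : perm_eq u (nseq (n ^ dl) 1).
  by rewrite esu -(expr0 r) -fact_nseq; apply: perm_map.
rewrite (fdist_perm_l _ _ _ pu) in euv.
rewrite fdist_disj in euv; last first.
  by move=> y /nseqP [-> _].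
rewrite size_nseq in euv.
apply: leq_trans euv.
have svdl : forall k, k \in sv -> (dl <= k)%N.
  move=> k ks; apply: Nmin; first exact: Asv.
  rewrite lt0n; apply/negP => /eqP k0.
  have : (1 : rat) \in v by rewrite esv; apply/mapP; exists k => //; rewrite k0 expr0.
  by rewrite (negPf Pv).
case: (boolP (n < d)%N) => nd.
  have -> : maxn n d = d by apply/maxn_idPr; apply: ltnW.
  rewrite esv /fact size_map leq_max; apply/orP; right.
  have rle : r <= 1 by rewrite hr ler_pdivrMr ?ltr0n // mul1r ler_nat ltnW.
  have H : sumr r sv <= (size sv)%:R * r ^+ dl.
    by apply: sumr_le_size => k ks; apply: ler_wiXn2l => //; [apply: ltW | apply: svdl].
  rewrite Esv Ex hr expr_div_n mulrA in H.
  rewrite ler_pdivlMr ?exprn_gt0 ?ltr0n // -!natrX -!natrM ler_nat in H.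
  by rewrite mulnC leq_pmul2r // in H.
have -> : maxn n d = n by apply/maxn_idPl; rewrite leqNgt.
by rewrite leq_maxl.
Qed.

Lemma sum_nseq1 k : \sum_(a <- nseq k (1 : rat)) a = k%:R.
Proof.
elim: k => [|k IH]; first by rewrite big_nil.
by rewrite /= big_cons IH addrC natr1.
Qed.

Lemma nat_case (r : rat) N (m : nat) : 0 < r -> r = m%:R -> N 0%N ->
  catenary_degree_eq (S_rN r N) 0.
Proof.
move=> r0 hm N0.
have m0 : (0 < m)%N by rewrite -(ltr0n rat) -hm.
have atom1 : forall a, is_atom (S_rN r N) a -> a = 1.
  move=> a Aa; have [k [Nk ak]] := atom_form r N a r0 Aa; subst a.
  case: Aa => _ _ H.
  have mk : (0 < m ^ k)%N by rewrite expn_gt0 m0.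
  have e : r ^+ k = 1 + sumr r (nseq (m ^ k - 1) 0%N).
    by rewrite sumr_nseq expr0 mulr1 natrB // addrC subrK hm natrX.
  have S1 : S_rN r N 1 by rewrite -(expr0 r); apply: S_single.
  have Sc : S_rN r N (sumr r (nseq (m ^ k - 1) 0%N)) by exists (nseq (m ^ k - 1) 0%N); split => // j /nseqP [-> _].
  case: (H _ _ S1 Sc e) => [/eqP|c0]; first by rewrite oner_eq0.
  by rewrite e c0 addr0.
have ones : forall x z, is_factorization (S_rN r N) x z -> z = nseq (size z) 1 /\ x = (size z)%:R.
  move=> x z [Az Ez].
  have e : z = nseq (size z) 1.
    apply/all_pred1P; apply/allP => a az; rewrite /= (atom1 a (Az a az)) //.
  by split => //; rewrite -Ez {1}e sum_nseq1.
split; last by [].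
move=> x z z' Sx fz fz'.
have [e1 x1] := ones x z fz; have [e2 x2] := ones x z' fz'.
have : size z = size z' by apply/eqP; rewrite -(eqr_nat rat) -x1 -x2.
move=> es; rewrite e1 e2 es; apply: chain_refl.
Qed.

Lemma n1_false (r : rat) (d : nat) N dl : r = 1%:R / d%:R -> (1 < d)%N ->
  N 0%N -> N dl -> (0 < dl)%N -> (forall a b, N a -> N b -> N (a + b)%N) -> atomic (S_rN r N) -> False.
Proof.
move=> hr d1 N0 Nd dl0 Nadd At.
have d0 : (0 < d)%N by apply: ltnW.
have r0 : 0 < r by rewrite hr divr_gt0 // ltr0n.
have noat : forall k, N k -> ~ is_atom (S_rN r N) (r ^+ k).
  move=> k Nk [_ _ H].
  have e0 := idR r 1 d k dl hr d0; rewrite exp1n mul1r in e0.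
  have dd : (0 < d ^ dl)%N by rewrite expn_gt0 d0.
  have e : r ^+ k = r ^+ (k + dl) + sumr r (nseq (d ^ dl - 1) (k + dl)).
    rewrite sumr_nseq e0 -{1}(subnKC dd) natrD mulrDl mul1r //.
  have Nkd : N (k + dl)%N by apply: Nadd.
  have Sc : S_rN r N (sumr r (nseq (d ^ dl - 1) (k + dl))).
    by exists (nseq (d ^ dl - 1) (k + dl)); split => // j /nseqP [-> _].
  case: (H _ _ (S_single r N _ Nkd) Sc e) => /eqP.
    by rewrite expf_eq0 (gt_eqF r0) andbF.
  rewrite sumr_nseq mulf_eq0 expf_eq0 (gt_eqF r0) andbF orbF pnatr_eq0 subn_eq0 leqNgt.
  have : (1 < d ^ dl)%N.
    by rewrite -(exp1n dl) ltn_exp2r.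
  by move=> ->.
have [z fz] := At 1 (eq_ind _ (S_rN r N) (S_single r N 0%N N0) _ (expr0 r)).
have [s [As ez Es]] := fact_of r N 1 z r0 fz.
case: s As ez Es => [|k s] As ez Es.
  by move: Es; rewrite /sumr big_nil => /eqP; rewrite eq_sym oner_eq0.
apply: (noat k); first by apply: As; rewrite inE eqxx.
by case: fz => Az _; apply: Az; rewrite ez inE eqxx.
Qed.

Theorem mainTheorem8 (r : rat) (N : nat -> Prop) (delta0 : nat) :
  0 < r ->
  numerical_monoid N ->
  N delta0 -> (0 < delta0)%N -> (forall k, N k -> (0 < k)%N -> (delta0 <= k)%N) ->
  atomic (S_rN r N) ->
  ((exists m : nat, r = m%:R) -> catenary_degree_eq (S_rN r N) 0) /\
  (~ (exists m : nat, r = m%:R) ->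
     catenary_degree_eq (S_rN r N) (maxn `|numq r| `|denq r| ^ delta0)).
Proof.
move=> r0 [N0 Nadd _] Nd dl0 Nmin At.
split.
  by move=> [m hm]; apply: (nat_case r N m).
move=> nnat.
have hr := r_nd r r0.
have cop := coprime_num_den r.
have n0 : (0 < `|numq r|)%N by rewrite absz_gt0 numq_eq0 (gt_eqF r0).
have d0 : (0 < `|denq r|)%N by rewrite absz_gt0 denq_neq0.
move: hr cop n0 d0; set n := `|numq r|%N; set d := `|denq r|%N => hr cop n0 d0.
have d1 : (1 < d)%N.
  rewrite ltn_neqAle d0 andbT; apply/negP => /eqP d_1; apply: nnat; exists n.
  by rewrite hr -d_1 divr1.
have n1 : (1 < n)%N.
  rewrite ltn_neqAle n0 andbT; apply/negP => /eqP n_1.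
  by apply: (n1_false r d N delta0) => //; rewrite hr -n_1.
split; first exact: (upper r n d N delta0).
exact: (lower r n d N delta0).
Qed.
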